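(* Let $(N_0,c,w,P)$ be an RS-situation and $(N_0,v)$ the corresponding RS-game. Then $(N_0,v)$ is balanced, i.e. $Core(N_0,v)\neq\emptyset$.
   Context: Let $c\in\mathbb{R}$. An RS-problem is a triple $(c,w,p)$ where $w:\mathbb{R}_+\to(c,+\infty)$ is decreasing (non-increasing) and continuous, and $p:\mathbb{R}_+\to\mathbb{R}$ is decreasing (non-increasing) and continuous, satisfies $p(0)>w(0)$, and there exists $q>0$ with $p(q)=c$. An RS-situation is a tuple $(N_0,c,w,P)$ where $N=\{1,\dots,n\}$ is the set of retailers, $0$ denotes the supplier, $N_0=N\cup\{0\}$, $P=(p_1,\dots,p_n)$, and $(c,w,p_i)$ is an RS-problem for each $i\in N$. For $S\subseteq N$ write $S_0=S\cup\{0\}$. For $q\ge0$ and $\omega\in\mathbb{R}$, $\Pi_i^{ret}(q;\omega)=(p_i(q)-\omega)q$. For nonempty $S\subseteq N$, $(q_i^S)_{i\in S}$ is a fixed optimal solution of: maximize $\sum_{i\in S}(p_i(q_i)-w(q_S))q_i$ over $q\in\mathbb{R}_+^{S}$ subject to $p_i(q_i)\ge w(q_S)$ for all $i\in S$, where $q_S=\sum_{i\in S}q_i$; $q_S^S=\sum_{i\in S}q_i^S$. For $i\in N$, $q_i^c$ is a fixed optimal solution of: maximize $(p_i(q)-c)q$ over $q\ge0$ subject to $p_i(q)\ge c$. The corresponding RS-game $(N_0,v)$ is the TU game on $N_0$ with $v(\emptyset)=0$ and, for all $S\subseteq N$, $v(S)=\sum_{i\in S}\Pi_i^{ret}(q_i^S;w(q_S^S))$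 and $v(S_0)=\sum_{i\in S}\Pi_i^{ret}(q_i^c;c)$. The core is $Core(N_0,v)=\{x\in\mathbb{R}^{N_0}: \sum_{i\in N_0}x_i=v(N_0),\ \sum_{i\in T}x_i\ge v(T)\text{ for all }T\subset N_0\}$; a game is balanced iff its core is nonempty. *)

(* Defs.v *)
From HB Require Import structures.
From mathcomp Require Import all_boot all_order all_algebra.
From mathcomp Require Import all_classical all_reals all_analysis.
Set Implicit Arguments. Unset Strict Implicit. Unset Printing Implicit Defensive.
Import Order.TTheory GRing.Theory Num.Theory.
Import numFieldNormedType.Exports.
Local Open Scope classical_set_scope.
Local Open Scope ring_scope.

Section RS.
Variable R : realType.

Definition Rplus_set : set R := [set x | 0 <= x].

Definition nonincr_on_Rplus (f : R -> R) : Prop :=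
  forall x y, 0 <= x -> x <= y -> f y <= f x.

Definition RS_problem (c : R) (w p : R -> R) : Prop :=
  [/\ nonincr_on_Rplus w,
      {within Rplus_set, continuous w} &
      (forall x, 0 <= x -> c < w x)] /\
  [/\ nonincr_on_Rplus p,
      {within Rplus_set, continuous p},
      w 0 < p 0 &
      (exists q, 0 < q /\ p q = c)].

(* Retailers N = 'I_n; players N_0 = option 'I_n with None = supplier 0. *)
Definition RS_situation (n : nat) (c : R) (w : R -> R) (P : 'I_n -> R -> R) : Prop :=
  forall i, RS_problem c w (P i).

Definition Pi_ret (p : R -> R) (q omega : R) : R := (p q - omega) * q.

Definition qsum (n : nat) (S : {set 'I_n}) (q : 'I_n -> R) : R := \sum_(i in S) q i.

Definition coal_feasible (n : nat) (w : R -> R) (P : 'I_n -> R -> R)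
    (S : {set 'I_n}) (q : 'I_n -> R) : Prop :=
  forall i, i \in S -> 0 <= q i /\ w (qsum S q) <= P i (q i).

Definition coal_obj (n : nat) (w : R -> R) (P : 'I_n -> R -> R)
    (S : {set 'I_n}) (q : 'I_n -> R) : R :=
  \sum_(i in S) (P i (q i) - w (qsum S q)) * q i.

Definition coal_optimal (n : nat) (w : R -> R) (P : 'I_n -> R -> R)
    (S : {set 'I_n}) (q : 'I_n -> R) : Prop :=
  coal_feasible w P S q /\
  forall q', coal_feasible w P S q' -> coal_obj w P S q' <= coal_obj w P S q.

Definition single_optimal (c : R) (p : R -> R) (q : R) : Prop :=
  (0 <= q /\ c <= p q) /\
  forall q', 0 <= q' -> c <= p q' -> (p q' - c) * q' <= (p q - c) * q.

(* The RS-game, given the fixed optimal solutions qS (for coalitions) and qc. *)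
Definition RS_game (n : nat) (c : R) (w : R -> R) (P : 'I_n -> R -> R)
    (qS : {set 'I_n} -> 'I_n -> R) (qc : 'I_n -> R)
    (T : {set option 'I_n}) : R :=
  let S : {set 'I_n} := [set i : 'I_n | Some i \in T]%SET in
  if None \in T then \sum_(i in S) Pi_ret (P i) (qc i) c
  else \sum_(i in S) Pi_ret (P i) (qS S i) (w (qsum S (qS S))).

Definition core (N : finType) (v : {set N} -> R) : set (N -> R) :=
  [set x | \sum_(i in N) x i = v [set: N]%SET /\
           forall T : {set N}, T \proper [set: N]%SET -> v T <= \sum_(i in T) x i].

Definition balanced (N : finType) (v : {set N} -> R) : Prop :=
  core v !=set0.

End RS.

(* Main.v *)
Require Import Defs.
From HB Require Import structures.
From mathcomp Require Import all_boot all_order all_algebra.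
From mathcomp Require Import all_classical all_reals all_analysis.
Import Order.TTheory GRing.Theory Num.Theory.
Local Open Scope classical_set_scope.
Local Open Scope ring_scope.

Theorem theorem5p2 (R : realType) (n : nat) (c : R) (w : R -> R)
    (P : 'I_n -> R -> R) (qS : {set 'I_n} -> 'I_n -> R) (qc : 'I_n -> R) :
  RS_situation c w P ->
  (forall S : {set 'I_n}, S != finset.set0 -> coal_optimal w P S (qS S)) ->
  (forall i : 'I_n, single_optimal c (P i) (qc i)) ->
  balanced (RS_game c w P qS qc).
Proof.
move=> Hsit Hopt Hsing.
pose m i := Pi_ret (P i) (qc i) c.
pose x (o : option 'I_n) := if o is Some i then m i else 0.
have key : forall T : {set option 'I_n},
    \sum_(o in T) x o = \sum_(i in [set i : 'I_n | Some i \in T]%SET) m i.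
  move=> T; rewrite (big_setID [set None]%SET) /=.
  rewrite big1 ?add0r; last by move=> o /setIP[_ /set1P ->].
  have -> : (T :\: [set None] = Some @: [set i : 'I_n | Some i \in T])%SET.
    apply/setP => o; rewrite !inE; case: o => [i|] /=.
      apply/idP/idP => [Hi|/imsetP[j]]; last by rewrite inE => Hj [->].
      by apply/imsetP; exists i; rewrite ?inE.
    by apply/esym/negbTE/negP => /imsetP[].
  by rewrite big_imset //= => i j _ _ [].
exists x; split.
  transitivity (\sum_(o in [set: option 'I_n]%SET) x o); first by apply: eq_bigl => o; rewrite !inE.
  rewrite key /RS_game /= !inE /=.
  by apply: eq_bigl => i; rewrite !inE.
move=> T _; rewrite key /RS_game /=.
case: ifP => HN //.
set S := [set i : 'I_n | Some i \in T]%SET.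
apply: ler_sum => i Hi.
have SN : S != finset.set0 by apply/set0Pn; exists i.
have [[Hq Hw] _] := (fun H => conj (H i Hi) I) (proj1 (Hopt S SN)).
have [[_ _ Hcw] _] := Hsit i.
have Hpos : 0 <= qsum S (qS S) by apply: sumr_ge0 => j Hj; case: (proj1 (Hopt S SN) j Hj).
have Hc := Hcw _ Hpos.
have [_ Hmax] := Hsing i.
rewrite /m /Pi_ret.
have Hcp : c <= P i (qS S i) by apply: le_trans Hw; apply: ltW.
apply: le_trans (Hmax _ Hq Hcp).
apply: ler_wpM2r; first exact: Hq.
by apply: lerB; [exact: lexx | apply: ltW].
Qed.
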